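(* For every $\beta>1$, the $\beta$-shift $(X_\beta,\sigma)$ is $\mathrm{Per}(G_\beta,\Theta_\beta)$-closeable, i.e. every ergodic $\sigma$-invariant measure on $X_\beta$ has a generic point which is $\mathrm{Per}(G_\beta,\Theta_\beta)$-closeable.
   Context: Shift: for an alphabet $\mathcal A=\{0,1,\dots,r-1\}$, $\mathcal A^{\mathbb N}$ carries the metric $\rho(x,y)=2^{-\min\{k:x_k\ne y_k\}}$ for $x\ne y$, and $\sigma((\omega_i)_i)=(\omega_{i+1})_i$. $\beta$-shift: fix $\beta>1$, $T_\beta(x)=\beta x\bmod1$. The $\beta$-expansion of $1$ is $d_\beta=(d_j)_{j\ge1}$ with $d_j=\lfloor\beta T_\beta^{j-1}(1)\rfloor$. If $d_\beta$ ends in $0^\infty$ with last nonzero digit $d_k$, set $\widehat d_\beta=(d_1\dots d_{k-1}(d_k-1))^\infty$; otherwise $\widehat d_\beta=d_\beta$; write $\widehat d_\beta=(d_j)_{j\ge1}$. The $\beta$-shift $X_\beta\subset\{0,\dots,\lfloor\beta\rfloor\}^{\mathbb N}$ is the closure of the set of sequences $b$ with $\sigma^k(b)\prec\widehat d_\beta$ (lexicographic order) for all $k\ge0$. The labelled graph $(G_\beta,\Theta_\beta)$ has vertices $v_0,v_1,\dots$; for each $i\ge0$ an edge $v_i\to v_{i+1}$ labelled $d_{i+1}$, and if $d_{i+1}>0$, $d_{i+1}$ edges $v_i\to v_0$ labelled $0,1,\dots,d_{i+1}-1$. $\mathrm{Per}(G_\beta,\Theta_\beta)$ is the set of periodic points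 $w^\infty$ where $w$ is the label sequence of a closed path in $G_\beta$. $\mathcal E(x,n)=\frac1n\sum_{j<n}\delta_{\sigma^jx}$; $x$ is generic for $\mu$ if $\mathcal E(x,n)\to\mu$ weak$*$. $B(x,n,\varepsilon)=\{y:\rho(\sigma^jy,\sigma^jx)<\varepsilon,\ 0\le j<n\}$. A point $x$ is $K$-closeable if for every $\varepsilon>0$, $N>0$ there exist integers $N\le p\le q\le(1+\varepsilon)p$ and $y\in B(x,p,\varepsilon)\cap K$ with $\sigma^qy=y$. *)

(* Defs.v *)
From Stdlib Require Import Reals Lra Lia Arith ClassicalEpsilon ConstructiveEpsilon.
Open Scope R_scope.

(** Sequences over the alphabet are functions nat -> nat (indices from 0). *)
Definition Seq := nat -> nat.

Definition shiftn (k : nat) (x : Seq) : Seq := fun i => x (k + i)%nat.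

(** metric rho(x,y) = 2^{-min{k : x_k <> y_k}}, and 0 if x = y *)
Definition rho (x y : Seq) : R :=
  match excluded_middle_informative (exists k, x k <> y k) with
  | left H =>
      (/ 2) ^ (proj1_sig (ConstructiveEpsilon.epsilon_smallest (fun k => x k <> y k)
                 (fun k => match Nat.eq_dec (x k) (y k) with
                           | left e => right (fun h => h e)
                           | right n => left n end) H))
  | right _ => 0
  end.

Definition rfloor (x : R) : Z := (up x - 1)%Z.
Definition Tbeta (beta x : R) : R := beta * x - IZR (rfloor (beta * x)).

(** d_j = floor(beta * T_beta^{j-1}(1)), for j >= 1 *)
Definition dexp (beta : R) (j : nat) : nat :=
  Z.to_nat (rfloor (beta * Nat.iter (j - 1) (Tbeta beta) 1)).

Definition last_nonzero (beta : R) (k : nat) : Prop :=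
  (1 <= k)%nat /\ dexp beta k <> 0%nat /\ (forall j, (k < j)%nat -> dexp beta j = 0%nat).

(** hat d_beta, as a 0-indexed sequence: dhat beta i = \hat d_{i+1} *)
Definition dhat (beta : R) : Seq := fun i =>
  match excluded_middle_informative (exists k, last_nonzero beta k) with
  | left H =>
      let k := proj1_sig (@ClassicalEpsilon.constructive_indefinite_description nat (last_nonzero beta) H) in
      let m := (i mod k)%nat in
      if Nat.eqb m (k - 1) then (dexp beta k - 1)%nat else dexp beta (m + 1)
  | right _ => dexp beta (i + 1)
  end.

Definition lex_lt (x y : Seq) : Prop :=
  exists n, (forall i, (i < n)%nat -> x i = y i) /\ (x n < y n)%nat.

Definition Xbeta0 (beta : R) (b : Seq) : Prop :=
  (forall i, (b i <= Z.to_nat (rfloor beta))%nat) /\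
  (forall k, lex_lt (shiftn k b) (dhat beta)).

Definition Xbeta (beta : R) (x : Seq) : Prop :=
  forall eps, 0 < eps -> exists b, Xbeta0 beta b /\ rho x b < eps.

(** labelled graph G_beta: vertices v_i = i; edge i -> j with label a *)
Definition Gedge (beta : R) (i j a : nat) : Prop :=
  (j = S i /\ a = dhat beta i) \/ (j = 0%nat /\ (a < dhat beta i)%nat).

Definition PerG (beta : R) (y : Seq) : Prop :=
  exists (v w : nat -> nat) (n : nat),
    (0 < n)%nat /\ v n = v 0%nat /\
    (forall i, (i < n)%nat -> Gedge beta (v i) (v (S i)) (w i)) /\
    (forall i, y i = w (i mod n)%nat).

Definition Bowen (x : Seq) (n : nat) (eps : R) (y : Seq) : Prop :=
  forall j, (j < n)%nat -> rho (shiftn j y) (shiftn j x) < eps.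

Definition closeable (K : Seq -> Prop) (x : Seq) : Prop :=
  forall (eps : R) (N : nat), 0 < eps -> (0 < N)%nat ->
    exists (p q : nat) (y : Seq),
      (N <= p)%nat /\ (p <= q)%nat /\ INR q <= (1 + eps) * INR p /\
      Bowen x p eps y /\ K y /\ (forall i, y (q + i)%nat = y i).

(** Borel sigma-algebra of N^N (product of discrete topologies),
    generated by cylinder sets *)
Inductive borel : (Seq -> Prop) -> Prop :=
| borel_cyl : forall (n : nat) (w : Seq),
    borel (fun x => forall i, (i < n)%nat -> x i = w i)
| borel_compl : forall A, borel A -> borel (fun x => ~ A x)
| borel_union : forall A : nat -> Seq -> Prop,
    (forall n, borel (A n)) -> borel (fun x => exists n, A n x).

(** Borel probability measure (values outside Borel sets are irrelevant) *)
Definition prob_measure (mu : (Seq -> Prop) -> R) : Prop :=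
  (forall A, borel A -> 0 <= mu A) /\
  mu (fun _ => True) = 1 /\
  (forall A : nat -> Seq -> Prop,
     (forall n, borel (A n)) ->
     (forall n m x, n <> m -> A n x -> A m x -> False) ->
     infinite_sum (fun n => mu (A n)) (mu (fun x => exists n, A n x))).

(** a Borel probability measure on X_beta, i.e. concentrated on X_beta *)
Definition measure_on (S : Seq -> Prop) (mu : (Seq -> Prop) -> R) : Prop :=
  prob_measure mu /\ mu S = 1.

Definition invariant (mu : (Seq -> Prop) -> R) : Prop :=
  forall A, borel A -> mu (fun x => A (shiftn 1 x)) = mu A.

Definition ergodic_on (S : Seq -> Prop) (mu : (Seq -> Prop) -> R) : Prop :=
  forall A, borel A -> (forall x, S x -> (A (shiftn 1 x) <-> A x)) ->
    mu A = 0 \/ mu A = 1.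

Definition indic (A : Seq -> Prop) (x : Seq) : R :=
  if excluded_middle_informative (A x) then 1 else 0.
Fixpoint sval (l : list (R * (Seq -> Prop))) (x : Seq) : R :=
  match l with nil => 0 | cons (c, A) l' => c * indic A x + sval l' x end.
Fixpoint sint (mu : (Seq -> Prop) -> R) (l : list (R * (Seq -> Prop))) : R :=
  match l with nil => 0 | cons (c, A) l' => c * mu A + sint mu l' end.
Definition simple (l : list (R * (Seq -> Prop))) : Prop :=
  forall c A, List.In (c, A) l -> borel A.

(** I = \int_S f dmu (for bounded measurable f on S, with mu(S)=1):
    I lies between all lower and upper simple-function integrals *)
Definition integral (S : Seq -> Prop) (mu : (Seq -> Prop) -> R) (f : Seq -> R) (I : R) : Prop :=
  (forall l, simple l -> (forall x, S x -> sval l x <= f x) -> sint mu l <= I) /\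
  (forall l, simple l -> (forall x, S x -> f x <= sval l x) -> I <= sint mu l).

Definition continuous_on (S : Seq -> Prop) (f : Seq -> R) : Prop :=
  forall x, S x -> forall eps, 0 < eps -> exists delta, 0 < delta /\
    forall y, S y -> rho x y < delta -> Rabs (f y - f x) < eps.

(** x is generic for mu: E(x,n) -> mu weak-*, i.e.
    (1/n) sum_{j<n} f(sigma^j x) -> \int f dmu for every f in C(S) *)
Definition generic (S : Seq -> Prop) (mu : (Seq -> Prop) -> R) (x : Seq) : Prop :=
  forall f, continuous_on S f ->
    exists I, integral S mu f I /\
      Un_cv (fun n => sum_f_R0 (fun j => f (shiftn j x)) n / INR (n + 1)) I.

(* Main.v *)
Require Import Defs.
From Stdlib Require Import Reals.
From Stdlib Require Import Lra Lia Arith List.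
From Stdlib Require Import Classical ClassicalEpsilon FunctionalExtensionality PropExtensionality.
Open Scope R_scope.

Lemma set_ext (A B : Seq -> Prop) : (forall x, A x <-> B x) -> A = B.
Proof. intros H; apply functional_extensionality; intro x; apply propositional_extensionality; auto. Qed.

Lemma borel_ext A B : borel A -> (forall x, A x <-> B x) -> borel B.
Proof. intros H E; rewrite <- (set_ext A B E); exact H. Qed.

Lemma borel_True : borel (fun _ => True).
Proof. apply (borel_ext (fun x => forall i, (i < 0)%nat -> x i = (fun _ => 0%nat) i)).
  apply borel_cyl. intros x; split; auto. intros _ i Hi; lia. Qed.

Lemma borel_False : borel (fun _ => False).
Proof. apply (borel_ext (fun x => ~ True)). apply borel_compl, borel_True. intros; tauto. Qed.

Lemma borel_inter A B : borel A -> borel B -> borel (fun x => A x /\ B x).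
Proof. intros HA HB.
  apply (borel_ext (fun x => ~ (exists n, (fun n => match n with 0%nat => fun x => ~ A x | _ => fun x => ~ B x end) n x))).
  apply borel_compl, borel_union. intros [|n]; apply borel_compl; auto.
  intros x; split.
  - intros H; split; apply NNPP; intro C; apply H; [exists 0%nat | exists 1%nat]; auto.
  - intros [a b] [[|n] H]; auto. Qed.

Lemma borel_union2 A B : borel A -> borel B -> borel (fun x => A x \/ B x).
Proof. intros HA HB.
  apply (borel_ext (fun x => exists n, (fun n => match n with 0%nat => A | _ => B end) n x)).
  apply borel_union. intros [|n]; auto.
  intros x; split. intros [[|n] H]; auto. intros [H|H]; [exists 0%nat|exists 1%nat]; auto. Qed.

Lemma borel_inter_count (A : nat -> Seq -> Prop) : (forall n, borel (A n)) -> borel (fun x => forall n, A n x).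
Proof. intros H. apply (borel_ext (fun x => ~ exists n, (fun n x => ~ A n x) n x)).
  apply borel_compl, borel_union; intros; apply borel_compl; auto.
  intros x; split. intros Hn n; apply NNPP; intro C; apply Hn; eauto. intros Hn [n Hc]; auto. Qed.

Lemma borel_shift1 A : borel A -> borel (fun x => A (shiftn 1 x)).
Proof. intros H; induction H.
  - apply (borel_ext (fun x => exists a, (fun a x => forall i, (i < S n)%nat -> x i = (fun i => match i with 0%nat => a | S j => w j end) i) a x)).
    apply borel_union; intros a; apply borel_cyl.
    intros x; split.
    + intros [a Ha] i Hi. unfold shiftn. simpl. specialize (Ha (S i)). simpl in Ha. apply Ha; lia.
    + intros Hx. exists (x 0%nat). intros [|i] Hi; auto. apply (Hx i). lia.
  - apply borel_compl; auto.
  - apply (borel_union (fun n x => A n (shiftn 1 x))); auto.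
Qed.

Lemma shiftn_shiftn a b x : shiftn a (shiftn b x) = shiftn (b + a) x.
Proof. unfold shiftn; apply functional_extensionality; intro i; f_equal; lia. Qed.

Lemma shiftn_0 x : shiftn 0 x = x.
Proof. unfold shiftn; apply functional_extensionality; intro i; reflexivity. Qed.

Lemma borel_shift k A : borel A -> borel (fun x => A (shiftn k x)).
Proof. induction k; intros H.
  - apply (borel_ext A); auto. intros x; rewrite shiftn_0; tauto.
  - apply (borel_ext (fun x => (fun y => A (shiftn k y)) (shiftn 1 x))).
    apply (borel_shift1 (fun y => A (shiftn k y))); auto. intros x; simpl. rewrite shiftn_shiftn. replace (1 + k)%nat with (S k) by lia. tauto.
Qed.

Definition dep (n : nat) (P : Seq -> Prop) : Prop :=
  forall x y, (forall i, (i < n)%nat -> x i = y i) -> (P x <-> P y).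

Definition consq (a : nat) (y : Seq) : Seq := fun i => match i with 0%nat => a | S j => y j end.

Lemma borel_dep n : forall P, dep n P -> borel P.
Proof. induction n; intros P HP.
  - destruct (classic (P (fun _ => 0%nat))) as [H|H].
    + apply (borel_ext (fun _ => True)). apply borel_True. intros x; split; auto; intros _.
      apply (HP (fun _ => 0%nat)); auto. intros; lia.
    + apply (borel_ext (fun _ => False)). apply borel_False. intros x; split; try tauto; intros Hx.
      apply H. apply (HP (fun _ => 0%nat) x); auto. intros; lia.
  - apply (borel_ext (fun x => exists a, (fun a x => (x 0%nat = a) /\ (fun y => P (consq a y)) (shiftn 1 x)) a x)).
    + apply borel_union; intros a. apply borel_inter.
      * apply (borel_ext (fun x => forall i, (i < 1)%nat -> x i = (fun _ => a) i)). apply borel_cyl.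
        intros x; split. intros H; apply (H 0%nat); lia. intros H [|i] Hi; [auto|lia].
      * apply (borel_shift1 (fun y => P (consq a y))). apply IHn. intros x y Hxy. apply HP. intros [|i] Hi; simpl; auto. apply Hxy; lia.
    + intros x; split.
      * intros [a [H1 H2]]. simpl in H2. apply (HP _ x) in H2; auto. intros [|i] Hi; simpl; auto. 
      * intros Hx. exists (x 0%nat); split; auto. simpl. apply (HP _ x); auto. intros [|i] Hi; simpl; auto.
Qed.

Lemma half_pow_mono m n : (m <= n)%nat -> (/2)^n <= (/2)^m.
Proof. intros H. replace n with (m + (n - m))%nat by lia. rewrite pow_add.
  assert (0 <= (/2)^m) by (apply pow_le; lra).
  assert ((/2)^(n-m) <= 1). { rewrite <- (pow1 (n-m)). apply pow_incr; lra. }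
  assert (0 <= (/2)^(n-m)) by (apply pow_le; lra). nra. Qed.

Lemma rho_agree (x y : Seq) (K : nat) : (forall i, (i < K)%nat -> x i = y i) -> rho x y <= (/2)^K.
Proof. intros H. unfold rho. destruct excluded_middle_informative as [E|E].
  - destruct ConstructiveEpsilon.epsilon_smallest as [m [Hm1 Hm2]]. simpl.
    assert (K <= m)%nat. { destruct (le_lt_dec K m); auto. exfalso; apply Hm1; apply H; auto. }
    apply half_pow_mono; auto.
  - apply pow_le. lra.
Qed.

Lemma rho_lt (x y : Seq) (t : nat) : rho x y < (/2)^t -> forall i, (i <= t)%nat -> x i = y i.
Proof. intros H i Hi. destruct (Nat.eq_dec (x i) (y i)) as [e|ne]; auto. exfalso.
  unfold rho in H. destruct excluded_middle_informative as [E|E].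
  - destruct ConstructiveEpsilon.epsilon_smallest as [m [Hm1 Hm2]]. simpl in H.
    assert (m <= t)%nat. { specialize (Hm2 i ne). lia. }
    assert ((/2)^t <= (/2)^m). { apply half_pow_mono; auto. } lra.
  - apply E; eauto.
Qed.

Lemma half_pow_pos n : 0 < (/2)^n.
Proof. apply pow_lt; lra. Qed.

Lemma half_pow_small eps : 0 < eps -> exists L, (/2)^L < eps.
Proof. intros He. destruct (pow_lt_1_zero (/2)) with (y := eps) as [N HN].
  rewrite Rabs_right; lra. auto. exists N. specialize (HN N (Nat.le_refl _)).
  rewrite Rabs_right in HN; auto. apply Rle_ge, pow_le; lra. Qed.

Lemma mu_ext (mu : (Seq -> Prop) -> R) A B : (forall x, A x <-> B x) -> mu A = mu B.
Proof. intros E; rewrite (set_ext A B E); auto. Qed.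

Lemma inf_sum_eventually s l c : infinite_sum s l -> (exists N, forall n, (n >= N)%nat -> sum_f_R0 s n = c) -> l = c.
Proof. intros Hs [N HN]. apply NNPP; intro Hne.
  assert (He : Rabs (l - c) > 0) by (apply Rabs_pos_lt; lra).
  destruct (Hs _ He) as [M HM]. specialize (HM (Nat.max N M) ltac:(lia)).
  rewrite HN in HM by lia. unfold Rdist in HM. rewrite Rabs_minus_sym in HM. lra. Qed.

Lemma mu_False mu : prob_measure mu -> mu (fun _ => False) = 0.
Proof. intros [Hpos [H1 Hadd]].
  specialize (Hadd (fun _ _ => False) (fun _ => borel_False) ltac:(intros; tauto)). cbv beta in Hadd.
  rewrite (mu_ext mu (fun x => exists n : nat, False) (fun _ => False)) in Hadd by (intros; split; [intros [_ []]|tauto]).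
  set (a := mu (fun _ => False)) in *.
  assert (Ha : 0 <= a) by (apply Hpos, borel_False).
  destruct (Req_dec a 0) as [E|E]; auto. exfalso.
  assert (Hsum : forall n, sum_f_R0 (fun _ => a) n = INR (S n) * a).
  { induction n; simpl sum_f_R0. simpl; lra. rewrite IHn. rewrite !S_INR. lra. }
  destruct (Hadd a ltac:(lra)) as [N HN]. specialize (HN (S N) ltac:(lia)).
  rewrite Hsum in HN. unfold Rdist in HN. rewrite !S_INR in HN.
  assert (0 <= INR N) by apply pos_INR.
  rewrite Rabs_right in HN; nra. Qed.

Lemma mu_add mu : prob_measure mu -> forall A B, borel A -> borel B -> (forall x, A x -> B x -> False) ->
  mu (fun x => A x \/ B x) = mu A + mu B.
Proof. intros PM A B HA HB Hd. pose proof (mu_False mu PM) as H0. destruct PM as [Hpos [H1 Hadd]].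
  set (F := fun n => match n with 0%nat => A | 1%nat => B | _ => fun _ => False end).
  assert (HF : forall n, borel (F n)) by (intros [|[|n]]; simpl; auto using borel_False).
  specialize (Hadd F HF).
  assert (Hdis : forall n m x, n <> m -> F n x -> F m x -> False).
  { intros [|[|n]] [|[|m]] x Hnm; simpl; try tauto; try lia; eauto. }
  specialize (Hadd Hdis).
  rewrite (mu_ext mu (fun x => exists n, F n x) (fun x => A x \/ B x)) in Hadd.
  - apply (inf_sum_eventually _ _ _ Hadd). exists 1%nat. intros n Hn.
    induction n as [|n IH]; [lia|]. destruct n. simpl. lra.
    simpl sum_f_R0. simpl in IH. rewrite IH by lia. simpl. rewrite H0. lra.
  - intros x; split. intros [[|[|n]] H]; simpl in H; tauto.
    intros [H|H]; [exists 0%nat|exists 1%nat]; auto.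
Qed.

Lemma mu_compl mu : prob_measure mu -> forall A, borel A -> mu (fun x => ~ A x) = 1 - mu A.
Proof. intros PM A HA. pose proof (mu_add mu PM A (fun x => ~ A x) HA (borel_compl _ HA) ltac:(cbv beta; tauto)).
  destruct PM as [_ [H1 _]]. rewrite (mu_ext mu _ (fun _ => True)) in H by (intros; tauto). lra. Qed.

Lemma mu_mono mu : prob_measure mu -> forall A B, borel A -> borel B -> (forall x, A x -> B x) -> mu A <= mu B.
Proof. intros PM A B HA HB Hs.
  pose proof (mu_add mu PM A (fun x => B x /\ ~ A x) HA (borel_inter _ _ HB (borel_compl _ HA)) ltac:(cbv beta; tauto)).
  rewrite (mu_ext mu _ B) in H by (intros x; split; [intros [h|[h _]]; auto|intros Hb; destruct (classic (A x)); auto]).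
  destruct PM as [Hpos _]. assert (0 <= mu (fun x => B x /\ ~ A x)) by (apply Hpos, borel_inter; auto using borel_compl). lra. Qed.

Lemma mu_le1 mu : prob_measure mu -> forall A, borel A -> mu A <= 1.
Proof. intros PM A HA. pose proof (mu_compl mu PM A HA). destruct PM as [Hpos _].
  pose proof (Hpos _ (borel_compl _ HA)). lra. Qed.

Lemma mu_ge0 mu : prob_measure mu -> forall A, borel A -> 0 <= mu A.
Proof. intros [H _]; auto. Qed.

Definition before (A : nat -> Seq -> Prop) (n : nat) (x : Seq) : Prop := exists k, (k < n)%nat /\ A k x.

Lemma borel_before A : (forall n, borel (A n)) -> forall n, borel (before A n).
Proof. intros H n; induction n.
  - apply (borel_ext (fun _ => False)); auto using borel_False. intros x; split; [tauto|intros [k [Hk _]]; lia].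
  - apply (borel_ext (fun x => before A n x \/ A n x)). apply borel_union2; auto.
    intros x; split. intros [[k [Hk Ha]]|Ha]; exists k || exists n; split; auto; lia.
    intros [k [Hk Ha]]. destruct (Nat.eq_dec k n); subst; auto. left; exists k; split; auto; lia.
Qed.

Lemma mu_null_union mu : prob_measure mu -> forall A : nat -> Seq -> Prop, (forall n, borel (A n)) ->
  (forall n, mu (A n) = 0) -> mu (fun x => exists n, A n x) = 0.
Proof. intros PM A HA H0.
  set (D := fun n x => A n x /\ ~ before A n x).
  assert (HD : forall n, borel (D n)) by (intros; apply borel_inter; auto using borel_compl, borel_before).
  assert (HD0 : forall n, mu (D n) = 0).
  { intros n. pose proof (mu_mono mu PM (D n) (A n) (HD n) (HA n) ltac:(intros x [h _]; auto)).
    pose proof (mu_ge0 mu PM _ (HD n)). rewrite H0 in H. lra. }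
  destruct PM as [Hpos [H1 Hadd]].
  assert (Hdis : forall n m x, n <> m -> D n x -> D m x -> False).
  { intros n m x Hnm [Hn Hn'] [Hm Hm']. destruct (Nat.lt_gt_cases n m) as [[Hl|Hl] _]; auto.
    apply Hm'; exists n; auto. apply Hn'; exists m; auto. }
  specialize (Hadd D HD Hdis).
  rewrite (mu_ext mu (fun x => exists n, D n x) (fun x => exists n, A n x)) in Hadd.
  - apply (inf_sum_eventually _ _ _ Hadd). exists 0%nat. intros n _. induction n; simpl; rewrite HD0; try rewrite IHn; lra.
  - intros x; split. intros [n [Hn _]]; eauto.
    intros [n Hn]. induction n as [n IH] using (well_founded_induction lt_wf).
    destruct (classic (before A n x)) as [[k [Hk Hak]]|Hb]. apply (IH k); auto. exists n; split; auto.
Qed.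

Lemma mu_cont_below mu : prob_measure mu -> forall B : nat -> Seq -> Prop, (forall n, borel (B n)) ->
  (forall n x, B n x -> B (S n) x) -> forall t, t < mu (fun x => exists n, B n x) -> exists n, t < mu (B n).
Proof. intros PM B HB Hinc t Ht.
  set (D := fun n => match n with 0%nat => B 0%nat | S m => fun x => B (S m) x /\ ~ B m x end).
  assert (HD : forall n, borel (D n)) by (intros [|n]; simpl; auto using borel_inter, borel_compl).
  assert (Hmono : forall n m x, (n <= m)%nat -> B n x -> B m x).
  { intros n m x Hnm; induction Hnm; auto. }
  assert (Hdis : forall n m x, n <> m -> D n x -> D m x -> False).
  { assert (forall n m x, (n < m)%nat -> D n x -> D m x -> False).
    { intros n [|m] x Hnm Hn Hm; [lia|]. simpl in Hm. destruct Hm as [_ Hm]. apply Hm.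
      apply (Hmono n); [lia|]. destruct n; simpl in Hn; tauto. }
    intros n m x Hnm. destruct (Nat.lt_gt_cases n m) as [[Hl|Hl] _]; eauto. }
  assert (Hpart : forall n, sum_f_R0 (fun k => mu (D k)) n = mu (B n)).
  { induction n; [simpl; auto|]. rewrite tech5, IHn.
    rewrite <- (mu_add mu PM (B n) (D (S n))); auto.
    apply mu_ext. intros x; simpl; split. intros [H|[H _]]; auto.
    intros H; destruct (classic (B n x)); auto. intros x Hx [_ Hx']; auto. }
  destruct PM as [Hpos [H1 Hadd]].
  specialize (Hadd D HD Hdis).
  rewrite (mu_ext mu (fun x => exists n, D n x) (fun x => exists n, B n x)) in Hadd.
  - destruct (Hadd (mu (fun x => exists n, B n x) - t) ltac:(lra)) as [N HN].
    exists N. specialize (HN N (Nat.le_refl _)). rewrite Hpart in HN. unfold Rdist in HN.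
    apply Rabs_def2 in HN. lra.
  - intros x; split. intros [n Hn]. destruct n; simpl in Hn; [eauto|]. destruct Hn; eauto.
    intros [n Hn]. induction n. exists 0%nat; auto. destruct (classic (B n x)); auto. exists (S n); simpl; auto.
Qed.

Lemma mu_one_nonempty mu : prob_measure mu -> forall A, borel A -> 0 < mu A -> exists x, A x.
Proof. intros PM A HA Hp. apply NNPP; intro C. rewrite (mu_ext mu A (fun _ => False)) in Hp.
  rewrite mu_False in Hp; auto; lra. intros x; split; [intros h; apply C; eauto|tauto]. Qed.

Fixpoint sintE (mu : (Seq -> Prop) -> R) (E : Seq -> Prop) (l : list (R * (Seq -> Prop))) : R :=
  match l with nil => 0 | cons (c, A) l' => c * mu (fun x => A x /\ E x) + sintE mu E l' end.

Lemma indic_1 A x : A x -> indic A x = 1.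
Proof. unfold indic; destruct excluded_middle_informative; tauto. Qed.
Lemma indic_0 A x : ~ A x -> indic A x = 0.
Proof. unfold indic; destruct excluded_middle_informative; tauto. Qed.
Lemma indic_range A x : 0 <= indic A x <= 1.
Proof. unfold indic; destruct excluded_middle_informative; lra. Qed.

Lemma sintE_split mu : prob_measure mu -> forall l, simple l -> forall E A, borel E -> borel A ->
  sintE mu (fun x => E x /\ A x) l + sintE mu (fun x => E x /\ ~ A x) l = sintE mu E l.
Proof. intros PM l; induction l as [|[c B] l IH]; intros Hs E A HE HA; simpl; [lra|].
  assert (HB : borel B) by (apply (Hs c B); left; auto).
  assert (Hs' : simple l) by (intros c' A' H; apply (Hs c' A'); right; auto).
  rewrite <- (IH Hs' E A HE HA).
  rewrite <- (mu_ext mu (fun x => (B x /\ E x /\ A x) \/ (B x /\ E x /\ ~ A x)) (fun x => B x /\ E x)).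
  rewrite mu_add; auto. lra.
  all: try (repeat apply borel_inter; auto using borel_compl).
  intros x; tauto. intros x; split; [tauto|]. intros [h1 h2]; destruct (classic (A x)); tauto.
Qed.

Lemma sint_pos_gen mu S : prob_measure mu -> borel S -> mu S = 1 -> forall l, simple l ->
  forall E K, borel E -> (forall x, S x -> E x -> 0 <= K + sval l x) -> 0 <= K * mu E + sintE mu E l.
Proof. intros PM HS H1 l; induction l as [|[c A] l IH]; intros Hs E K HE Hpos; simpl in *.
  - destruct (classic (exists x, S x /\ E x)) as [[x [Sx Ex]]|Hn].
    + specialize (Hpos x Sx Ex). assert (0 <= mu E) by (apply mu_ge0; auto). nra.
    + assert (mu E <= mu (fun x => ~ S x)). { apply mu_mono; auto using borel_compl. intros x Ex Sx; apply Hn; eauto. }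
      rewrite mu_compl in H; auto. assert (0 <= mu E) by (apply mu_ge0; auto). assert (mu E = 0) by lra. rewrite H2; lra.
  - assert (HA : borel A) by (apply (Hs c A); left; auto).
    assert (Hs' : simple l) by (intros c' A' H; apply (Hs c' A'); right; auto).
    pose proof (IH Hs' (fun x => E x /\ A x) (K + c) ltac:(apply borel_inter; auto)) as I1.
    pose proof (IH Hs' (fun x => E x /\ ~ A x) K ltac:(apply borel_inter; auto using borel_compl)) as I2.
    assert (P1 : 0 <= (K + c) * mu (fun x => E x /\ A x) + sintE mu (fun x => E x /\ A x) l).
    { apply I1. intros x Sx [Ex Ax]. specialize (Hpos x Sx Ex). rewrite indic_1 in Hpos; auto. lra. }
    assert (P2 : 0 <= K * mu (fun x => E x /\ ~ A x) + sintE mu (fun x => E x /\ ~ A x) l).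
    { apply I2. intros x Sx [Ex Ax]. specialize (Hpos x Sx Ex). rewrite indic_0 in Hpos; auto. lra. }
    rewrite <- (sintE_split mu PM l Hs' E A HE HA).
    assert (mu E = mu (fun x => E x /\ A x) + mu (fun x => E x /\ ~ A x)).
    { rewrite <- mu_add; auto using borel_inter, borel_compl. apply mu_ext. intros x; split; [|tauto].
      intros Ex; destruct (classic (A x)); tauto. intros x; tauto. }
    rewrite (mu_ext mu (fun x => A x /\ E x) (fun x => E x /\ A x)) by (intros; tauto). nra.
Qed.

Lemma sintE_True mu l : sintE mu (fun _ => True) l = sint mu l.
Proof. induction l as [|[c A] l IH]; simpl; auto. rewrite IH. f_equal. f_equal. apply mu_ext; tauto. Qed.

Lemma sint_pos mu S : prob_measure mu -> borel S -> mu S = 1 -> forall l, simple l ->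
  (forall x, S x -> 0 <= sval l x) -> 0 <= sint mu l.
Proof. intros PM HS H1 l Hs Hp. rewrite <- sintE_True.
  pose proof (sint_pos_gen mu S PM HS H1 l Hs (fun _ => True) 0 borel_True ltac:(intros; rewrite Rplus_0_l; auto)). lra. Qed.

Definition negl (l : list (R * (Seq -> Prop))) := map (fun p => (- fst p, snd p)) l.

Lemma sval_app l1 l2 x : sval (l1 ++ l2) x = sval l1 x + sval l2 x.
Proof. induction l1 as [|[c A] l IH]; simpl; try rewrite IH; lra. Qed.
Lemma sint_app mu l1 l2 : sint mu (l1 ++ l2) = sint mu l1 + sint mu l2.
Proof. induction l1 as [|[c A] l IH]; simpl; try rewrite IH; lra. Qed.
Lemma sval_neg l x : sval (negl l) x = - sval l x.
Proof. induction l as [|[c A] l IH]; simpl in *; try rewrite IH; lra. Qed.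
Lemma sint_neg mu l : sint mu (negl l) = - sint mu l.
Proof. induction l as [|[c A] l IH]; simpl in *; try rewrite IH; lra. Qed.
Lemma simple_app l1 l2 : simple l1 -> simple l2 -> simple (l1 ++ l2).
Proof. intros H1 H2 c A H. apply in_app_or in H; destruct H; eauto. Qed.
Lemma simple_neg l : simple l -> simple (negl l).
Proof. intros H c A Hin. unfold negl in Hin. apply in_map_iff in Hin. destruct Hin as [[c' A'] [E Hin]].
  simpl in E. inversion E; subst. eauto. Qed.

Lemma sint_mono mu S : prob_measure mu -> borel S -> mu S = 1 -> forall l1 l2, simple l1 -> simple l2 ->
  (forall x, S x -> sval l1 x <= sval l2 x) -> sint mu l1 <= sint mu l2.
Proof. intros PM HS H1 l1 l2 H1s H2s Hle.
  pose proof (sint_pos mu S PM HS H1 (l2 ++ negl l1) (simple_app _ _ H2s (simple_neg _ H1s))).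
  rewrite sint_app, sint_neg in H. assert (0 <= sint mu l2 + - sint mu l1); [|lra].
  apply H. intros x Sx. rewrite sval_app, sval_neg. specialize (Hle x Sx). lra. Qed.

Fixpoint rsum (f : nat -> R) (n : nat) : R := match n with 0%nat => 0 | S m => rsum f m + f m end.

Lemma rsum_ext f g n : (forall i, (i < n)%nat -> f i = g i) -> rsum f n = rsum g n.
Proof. induction n; intros H; simpl; auto. rewrite IHn by (intros; apply H; lia). rewrite H by lia; auto. Qed.

Lemma rsum_split f a b : rsum f (a + b) = rsum f a + rsum (fun i => f (a + i)%nat) b.
Proof. induction b; simpl. rewrite Nat.add_0_r; lra. rewrite Nat.add_succ_r; simpl. rewrite IHb; lra. Qed.

Lemma rsum_S_front f k : rsum f (S k) = f 0%nat + rsum (fun i => f (S i)) k.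
Proof. replace (S k) with (1 + k)%nat by lia. rewrite rsum_split. simpl. lra. Qed.

Lemma rsum_nonneg f n : (forall i, 0 <= f i) -> 0 <= rsum f n.
Proof. intros H; induction n; simpl; auto; try lra. specialize (H n); lra. Qed.

Lemma rsum_le f g n : (forall i, f i <= g i) -> rsum f n <= rsum g n.
Proof. intros H; induction n; simpl; try lra. specialize (H n); lra. Qed.

Lemma rsum_mono f n m : (forall i, 0 <= f i) -> (n <= m)%nat -> rsum f n <= rsum f m.
Proof. intros H Hnm. replace m with (n + (m - n))%nat by lia. rewrite rsum_split.
  pose proof (rsum_nonneg (fun i => f (n + i)%nat) (m - n) ltac:(intros; apply H)). lra. Qed.

Lemma rsum_const c n : rsum (fun _ => c) n = INR n * c.
Proof. induction n; simpl rsum. simpl; lra. rewrite IHn, S_INR; lra. Qed.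

Lemma rsum_le_n f n : (forall i, f i <= 1) -> rsum f n <= INR n.
Proof. intros H. rewrite <- (Rmult_1_r (INR n)), <- rsum_const. apply rsum_le; auto. Qed.

Lemma rsum_scal c f n : rsum (fun i => c * f i) n = c * rsum f n.
Proof. induction n; simpl; try rewrite IHn; lra. Qed.
Lemma rsum_plus f g n : rsum (fun i => f i + g i) n = rsum f n + rsum g n.
Proof. induction n; simpl; try rewrite IHn; lra. Qed.

Lemma comb_max (h gd : nat -> R) (c : R) (n : nat) :
  0 <= c -> (forall j, 0 <= h j) -> (forall j, 0 <= gd j <= 1) ->
  (forall j, gd j <> 0 -> exists k, (1 <= k <= n)%nat /\ c * INR k < rsum (fun i => h (j + i)%nat) k) ->
  forall N s, c * rsum (fun i => gd (s + i)%nat) N <= rsum (fun i => h (s + i)%nat) (N + n).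
Proof. intros Hc Hh Hg Hgood N. induction N as [N IH] using (well_founded_induction lt_wf). intros s.
  destruct N as [|N'].
  - simpl. rewrite Rmult_0_r. apply rsum_nonneg; auto.
  - destruct (Req_dec (gd s) 0) as [E|E].
    + rewrite rsum_S_front. rewrite Nat.add_0_r, E, Rplus_0_l.
      specialize (IH N' ltac:(lia) (S s)).
      rewrite (rsum_ext (fun i => gd (s + S i)%nat) (fun i => gd (S s + i)%nat)) by (intros; f_equal; lia).
      eapply Rle_trans; [apply IH|].
      replace (S N' + n)%nat with (S (N' + n)) by lia. rewrite (rsum_S_front (fun i => h (s + i)%nat)).
      rewrite (rsum_ext (fun i => h (s + S i)%nat) (fun i => h (S s + i)%nat)) by (intros; f_equal; lia).
      pose proof (Hh (s + 0)%nat). lra.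
    + destruct (Hgood s E) as [k [Hk Hck]].
      destruct (le_lt_dec (S N') k) as [HkN|HkN].
      * assert (rsum (fun i => gd (s + i)%nat) (S N') <= INR (S N')) by (apply rsum_le_n; intros; apply Hg).
        assert (INR (S N') <= INR k) by (apply le_INR; auto).
        assert (rsum (fun i => h (s + i)%nat) k <= rsum (fun i => h (s + i)%nat) (S N' + n)) by (apply rsum_mono; auto; lia).
        assert (0 <= rsum (fun i => gd (s + i)%nat) (S N')) by (apply rsum_nonneg; intros; apply Hg).
        nra.
      * replace (S N') with (k + (S N' - k))%nat by lia. rewrite rsum_split.
        replace (k + (S N' - k) + n)%nat with (k + (S N' - k + n))%nat by lia. rewrite rsum_split.
        specialize (IH (S N' - k)%nat ltac:(lia) (s + k)%nat).
        rewrite (rsum_ext (fun i => gd (s + (k + i))%nat) (fun i => gd (s + k + i)%nat)) by (intros; f_equal; lia).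
        rewrite (rsum_ext (fun i => h (s + (k + i))%nat) (fun i => h (s + k + i)%nat)) by (intros; f_equal; lia).
        assert (rsum (fun i => gd (s + i)%nat) k <= INR k) by (apply rsum_le_n; intros; apply Hg).
        nra.
Qed.

Definition cnt (C : Seq -> Prop) (x : Seq) (k : nat) : R := rsum (fun i => indic C (shiftn i x)) k.
Definition Bset (C : Seq -> Prop) (c : R) (n : nat) : Seq -> Prop :=
  fun y => exists k, (1 <= k <= n)%nat /\ c * INR k < cnt C y k.

Lemma dep_mono n m P : dep n P -> (n <= m)%nat -> dep m P.
Proof. intros H Hnm x y Hxy. apply H. intros; apply Hxy; lia. Qed.

Lemma dep_shift d j C : dep d C -> dep (j + d) (fun x => C (shiftn j x)).
Proof. intros H x y Hxy. apply H. intros i Hi. unfold shiftn. apply Hxy. lia. Qed.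

Lemma indic_dep d C x y : dep d C -> (forall i, (i < d)%nat -> x i = y i) -> indic C x = indic C y.
Proof. intros H Hxy. unfold indic. specialize (H x y Hxy).
  do 2 destruct excluded_middle_informative; tauto. Qed.


Lemma cnt_dep d C k x y : dep d C -> (forall i, (i < k + d)%nat -> x i = y i) -> cnt C x k = cnt C y k.
Proof. intros H Hxy. unfold cnt. apply rsum_ext. intros i Hi. apply (indic_dep d); auto.
  intros i' Hi'. unfold shiftn. apply Hxy. lia. Qed.

Lemma dep_Bset d C c n : dep d C -> dep (n + d) (Bset C c n).
Proof. intros H x y Hxy. unfold Bset. split; intros [k [Hk Hc]]; exists k; split; auto.
  - rewrite <- (cnt_dep d C k x y); auto. intros; apply Hxy; lia.
  - rewrite (cnt_dep d C k x y); auto. intros; apply Hxy; lia. Qed.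

Lemma cnt_shift C x j k : cnt C (shiftn j x) k = rsum (fun i => indic C (shiftn (j + i) x)) k.
Proof. unfold cnt. apply rsum_ext; intros. rewrite shiftn_shiftn; auto. Qed.

Lemma cnt_S C x k : cnt C x (S k) = indic C x + cnt C (shiftn 1 x) k.
Proof. unfold cnt. rewrite rsum_S_front. rewrite shiftn_0. f_equal; try (apply rsum_ext; intros; rewrite shiftn_shiftn; reflexivity). Qed.

Lemma cnt_nonneg C x k : 0 <= cnt C x k.
Proof. unfold cnt. apply rsum_nonneg. intros; apply indic_range. Qed.

Lemma cnt_le C x k : cnt C x k <= INR k.
Proof. unfold cnt. apply rsum_le_n. intros; apply indic_range. Qed.

Lemma indic_compl C x : indic (fun y => ~ C y) x = 1 - indic C x.
Proof. unfold indic. do 2 destruct excluded_middle_informative; tauto || lra. Qed.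

Lemma cnt_compl C x k : cnt (fun y => ~ C y) x k = INR k - cnt C x k.
Proof. unfold cnt. induction k; simpl rsum. simpl; lra. rewrite IHk, indic_compl, S_INR. lra. Qed.

Fixpoint shl (c : R) (A : Seq -> Prop) (N : nat) : list (R * (Seq -> Prop)) :=
  match N with 0%nat => nil | S m => (c, fun x => A (shiftn m x)) :: shl c A m end.

Lemma sval_shl c A N x : sval (shl c A N) x = c * rsum (fun j => indic A (shiftn j x)) N.
Proof. induction N; simpl; [lra|]. rewrite IHN.
  replace (indic (fun y => A (shiftn N y)) x) with (indic A (shiftn N x)) by reflexivity. lra. Qed.

Lemma mu_inv_iter mu A j : invariant mu -> borel A -> mu (fun x => A (shiftn j x)) = mu A.
Proof. intros Hinv HA. induction j.
  - apply mu_ext. intros x; rewrite shiftn_0; tauto.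
  - rewrite <- IHj. rewrite <- (Hinv (fun x => A (shiftn j x))) by (apply borel_shift; auto).
    apply mu_ext. intros x. rewrite shiftn_shiftn. replace (1 + j)%nat with (S j) by lia. tauto. Qed.

Lemma sint_shl mu c A N : invariant mu -> borel A -> sint mu (shl c A N) = c * INR N * mu A.
Proof. intros Hinv HA. induction N; simpl sint. simpl; lra. rewrite IHN, mu_inv_iter, S_INR; auto; lra. Qed.

Lemma simple_shl c A N : borel A -> simple (shl c A N).
Proof. intros HA; induction N; intros c' A' Hin; simpl in Hin; [tauto|]. destruct Hin as [E|E].
  inversion E; subst; apply borel_shift; auto. eapply IHN; eauto. Qed.

Lemma maxineq mu d C c n : prob_measure mu -> invariant mu -> dep d C -> 0 <= c ->
  c * mu (Bset C c n) <= mu C.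
Proof. intros PM Hinv HC Hc.
  assert (BC : borel C) by (apply (borel_dep d); auto).
  assert (BB : borel (Bset C c n)) by (apply (borel_dep (n + d)), dep_Bset; auto).
  assert (HN : forall N, c * INR N * mu (Bset C c n) <= 1 * INR (N + n) * mu C).
  { intros N. rewrite <- sint_shl, <- sint_shl; auto.
    destruct PM as [P0 [P1 P2]] eqn:EPM.
    apply (sint_mono mu (fun _ => True) PM borel_True P1); auto using simple_shl.
    intros x _. rewrite !sval_shl, Rmult_1_l.
    pose proof (comb_max (fun j => indic C (shiftn j x)) (fun j => indic (Bset C c n) (shiftn j x)) c n Hc
       ltac:(intros j; exact (proj1 (indic_range C (shiftn j x)))) ltac:(intros j; exact (indic_range (Bset C c n) (shiftn j x)))) as CM.
    specialize (CM ltac:(intros j Hj; unfold indic in Hj; destruct excluded_middle_informative as [[k [Hk Hck]]|]; [|lra];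
       exists k; split; auto; rewrite <- cnt_shift; auto) N 0%nat). simpl in CM. exact CM. }
  apply Rnot_lt_le; intro Hlt.
  destruct (INR_archimed (c * mu (Bset C c n) - mu C) (INR n * mu C) ltac:(lra)) as [N HN'].
  specialize (HN N). rewrite plus_INR in HN. lra.
Qed.

Definition Lset (C : Seq -> Prop) (a delta : R) : Seq -> Prop :=
  fun x => forall m M : nat, exists k, (M <= k)%nat /\ (a + delta - / (INR m + 1)) * INR k < cnt C x k.

Lemma borel_Lset d C a delta : dep d C -> borel (Lset C a delta).
Proof. intros HC. unfold Lset. apply borel_inter_count; intros m. apply borel_inter_count; intros M.
  apply borel_union; intros k. apply (borel_dep (k + d)).
  intros x y Hxy. rewrite (cnt_dep d C k x y); auto; tauto. Qed.

Lemma inv_half m : / (INR (2 * m + 1) + 1) = / 2 * / (INR m + 1).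
Proof. rewrite plus_INR, mult_INR. simpl INR. rewrite <- Rinv_mult. f_equal. lra. Qed.

Lemma Lset_inv C a delta x : 0 < delta ->
  (Lset C a delta (shiftn 1 x) <-> Lset C a delta x).
Proof. intros Hd. unfold Lset. split; intros H m M.
  - set (e := / (INR m + 1)). assert (He : 0 < e) by (unfold e; apply Rinv_0_lt_compat; pose proof (pos_INR m); lra).
    assert (He1 : e <= 1) by (unfold e; rewrite <- Rinv_1; apply Rinv_le_contravar; try lra; pose proof (pos_INR m); lra).
    destruct (INR_archimed (e / 2) (2 + Rabs (a + delta)) ltac:(lra)) as [K0 HK0].
    destruct (H (2 * m + 1)%nat (M + K0)%nat) as [k [Hk Hc]]. rewrite inv_half in Hc. fold e in Hc.
    exists (S k). split; [lia|]. rewrite cnt_S.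
    pose proof (indic_range C x).
    assert (INR K0 <= INR k) by (apply le_INR; lia). rewrite S_INR.
    pose proof (Rle_abs (a + delta)). pose proof (Rle_abs (- (a + delta))). rewrite Rabs_Ropp in H3. nra.
  - set (e := / (INR m + 1)). assert (He : 0 < e) by (unfold e; apply Rinv_0_lt_compat; pose proof (pos_INR m); lra).
    assert (He1 : e <= 1) by (unfold e; rewrite <- Rinv_1; apply Rinv_le_contravar; try lra; pose proof (pos_INR m); lra).
    destruct (INR_archimed (e / 2) (2 + Rabs (a + delta)) ltac:(lra)) as [K0 HK0].
    destruct (H (2 * m + 1)%nat (S (M + K0))%nat) as [k [Hk Hc]]. rewrite inv_half in Hc. fold e in Hc.
    destruct k as [|k]; [lia|]. rewrite cnt_S in Hc.
    exists k. split; [lia|].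
    pose proof (indic_range C x).
    assert (INR K0 <= INR k) by (apply le_INR; lia). rewrite S_INR in Hc.
    pose proof (Rle_abs (a + delta)). pose proof (Rle_abs (- (a + delta))). rewrite Rabs_Ropp in H3. nra.
Qed.

Lemma Birk_upper mu S d C delta : prob_measure mu -> invariant mu -> ergodic_on S mu -> dep d C -> 0 < delta ->
  mu (Lset C (mu C) delta) = 0.
Proof. intros PM Hinv Herg HC Hd.
  assert (BC : borel C) by (apply (borel_dep d); auto).
  set (a := mu C). assert (Ha0 : 0 <= a) by (apply mu_ge0; auto). assert (Ha1 : a <= 1) by (apply mu_le1; auto).
  destruct (Herg (Lset C a delta) (borel_Lset d C a delta HC) ltac:(intros x _; apply Lset_inv; auto)) as [E|E]; auto.
  exfalso.
  destruct (archimed_cor1 delta Hd) as [N [HN HN0]].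
  set (m := (N - 1)%nat). assert (Hm : INR m + 1 = INR N) by (unfold m; rewrite <- S_INR; f_equal; lia).
  set (c := a + delta - / (INR m + 1)). assert (Hc : a < c) by (unfold c; rewrite Hm; lra).
  assert (Hsub : forall x, Lset C a delta x -> exists n, Bset C c n x).
  { intros x Hx. destruct (Hx m 1%nat) as [k [Hk Hck]]. exists k, k. split; [lia|auto]. }
  assert (BU : borel (fun x => exists n, Bset C c n x)).
  { apply borel_union; intros n; apply (borel_dep (n + d)), dep_Bset; auto. }
  assert (Hu : 1 <= mu (fun x => exists n, Bset C c n x)).
  { rewrite <- E. apply mu_mono; auto. apply (borel_Lset d); auto. }
  destruct (mu_cont_below mu PM (Bset C c) ltac:(intros n; apply (borel_dep (n + d)), dep_Bset; auto)
     ltac:(intros n x [k [Hk Hck]]; exists k; split; auto; lia) (a / c)) as [n Hn].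
  { apply Rlt_le_trans with 1; auto. apply Rmult_lt_reg_r with c; [lra|]. unfold Rdiv. rewrite Rmult_assoc, Rinv_l; lra. }
  pose proof (maxineq mu d C c n PM Hinv HC ltac:(lra)).
  apply (Rmult_lt_compat_l c) in Hn; [|lra]. unfold Rdiv in Hn. rewrite <- Rmult_assoc, (Rmult_comm c a), Rmult_assoc, Rinv_r in Hn by lra.
  fold a in H. lra.
Qed.

Lemma not_Lset_bound C a delta x : ~ Lset C a delta x -> exists M, forall k, (M <= k)%nat -> cnt C x k <= (a + delta) * INR k.
Proof. intros H. unfold Lset in H. apply not_all_ex_not in H. destruct H as [m H]. apply not_all_ex_not in H. destruct H as [M H].
  exists M. intros k Hk. apply Rnot_lt_le. intros Hc. apply H. exists k. split; auto.
  assert (0 < / (INR m + 1)) by (apply Rinv_0_lt_compat; pose proof (pos_INR m); lra).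
  pose proof (pos_INR k). nra. Qed.

Lemma freq_cv C a x :
  (forall j, ~ Lset C a (/ (INR j + 1)) x) -> (forall j, ~ Lset (fun y => ~ C y) (1 - a) (/ (INR j + 1)) x) ->
  Un_cv (fun n => cnt C x (S n) / INR (S n)) a.
Proof. intros H1 H2 eps Heps.
  destruct (archimed_cor1 eps Heps) as [N [HN HN0]].
  set (j := (N - 1)%nat). assert (Hj : INR j + 1 = INR N) by (unfold j; rewrite <- S_INR; f_equal; lia).
  destruct (not_Lset_bound _ _ _ _ (H1 j)) as [M1 HM1]. destruct (not_Lset_bound _ _ _ _ (H2 j)) as [M2 HM2].
  rewrite Hj in HM1, HM2.
  exists (M1 + M2)%nat. intros n Hn. unfold Rdist.
  specialize (HM1 (S n) ltac:(lia)). specialize (HM2 (S n) ltac:(lia)). rewrite cnt_compl in HM2.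
  assert (HS : 0 < INR (S n)) by (apply lt_0_INR; lia).
  apply Rabs_def1.
  - apply Rle_lt_trans with (/ INR N). 2: lra.
    apply Rmult_le_reg_r with (INR (S n)); auto. unfold Rdiv. rewrite Rmult_minus_distr_r, Rmult_assoc, Rinv_l by lra.
    assert (0 < / INR N) by (apply Rinv_0_lt_compat, lt_0_INR; lia). nra.
  - apply Rlt_le_trans with (- / INR N). lra.
    apply Rmult_le_reg_r with (INR (S n)); auto. unfold Rdiv. rewrite Rmult_minus_distr_r, Rmult_assoc, Rinv_l by lra.
    nra.
Qed.

Definition agree (n : nat) (x y : Seq) : Prop := forall i, (i < n)%nat -> x i = y i.

Lemma Xbeta_iff beta x : Xbeta beta x <-> forall n, exists b, Xbeta0 beta b /\ agree n x b.
Proof. split.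
  - intros H n. destruct (H ((/2)^n) (half_pow_pos n)) as [b [Hb Hr]]. exists b; split; auto.
    intros i Hi. apply (rho_lt x b n Hr); lia.
  - intros H eps He. destruct (half_pow_small eps He) as [L HL]. destruct (H L) as [b [Hb Ha]].
    exists b; split; auto. pose proof (rho_agree x b L Ha). lra.
Qed.

Lemma Xbeta_bound beta x i : Xbeta beta x -> (x i <= Z.to_nat (rfloor beta))%nat.
Proof. intros H. rewrite Xbeta_iff in H. destruct (H (S i)) as [b [[Hb _] Ha]]. rewrite Ha by lia. auto. Qed.

Lemma Xbeta0_shift beta b j : Xbeta0 beta b -> Xbeta0 beta (shiftn j b).
Proof. intros [H1 H2]. split. intros i; apply H1. intros k. rewrite shiftn_shiftn. apply H2. Qed.

Lemma Xbeta_shift beta x j : Xbeta beta x -> Xbeta beta (shiftn j x).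
Proof. rewrite !Xbeta_iff. intros H n. destruct (H (j + n)%nat) as [b [Hb Ha]].
  exists (shiftn j b). split. apply Xbeta0_shift; auto. intros i Hi. unfold shiftn. apply Ha. lia. Qed.

Lemma Xbeta_closed beta x : (forall n, exists z, Xbeta beta z /\ agree n x z) -> Xbeta beta x.
Proof. intros H. rewrite Xbeta_iff. intros n. destruct (H n) as [z [Hz Ha]]. rewrite Xbeta_iff in Hz.
  destruct (Hz n) as [b [Hb Hb']]. exists b. split; auto. intros i Hi. rewrite Ha, Hb'; auto. Qed.

Lemma borel_Xbeta beta : borel (Xbeta beta).
Proof. apply (borel_ext (fun x => forall n, (fun n x => exists b, Xbeta0 beta b /\ agree n x b) n x)).
  - apply borel_inter_count. intros n. apply (borel_dep n). intros x y Hxy. split; intros [b [Hb Ha]]; exists b; split; auto;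
    intros i Hi; rewrite <- Ha; auto.
    symmetry; apply Hxy; auto.
  - intros x. rewrite Xbeta_iff. tauto.
Qed.

Lemma dhat_inf beta : (exists n, (0 < dhat beta n)%nat) -> forall M, exists i, (M <= i)%nat /\ (0 < dhat beta i)%nat.
Proof. intros [n Hn] M. unfold dhat in *. destruct excluded_middle_informative as [H|H].
  - destruct (constructive_indefinite_description (last_nonzero beta) H) as [k Hk]. simpl in *.
    destruct Hk as [Hk1 _]. exists (n + M * k)%nat. split. nia.
    rewrite Nat.Div0.mod_add. auto.
  - apply NNPP. intros Hc. apply H.
    assert (HM : forall i, (M <= i)%nat -> dexp beta (i + 1) = 0%nat).
    { intros i Hi. destruct (Nat.eq_dec (dexp beta (i+1)) 0); auto. exfalso; apply Hc. exists i; split; auto; lia. }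
    assert (Hn0 : dexp beta (n + 1) <> 0%nat) by lia. clear Hn Hc.
    assert (HnM : (n < M)%nat). { destruct (le_lt_dec M n); auto. specialize (HM n l). lia. }
    clear H. revert n Hn0 HnM. induction n as [n IH] using (well_founded_induction
      (well_founded_ltof nat (fun j => M - j)%nat)). intros Hn0 HnM.
    destruct (classic (exists i, (n < i)%nat /\ dexp beta (i + 1) <> 0%nat)) as [[i [Hi Hi0]]|Hno].
    + assert (i < M)%nat. { destruct (le_lt_dec M i); auto. specialize (HM i l). lia. }
      apply (IH i); auto. unfold ltof. lia.
    + exists (n + 1)%nat. split; [lia|]. split; auto. intros j Hj.
      destruct (Nat.eq_dec (dexp beta j) 0); auto. exfalso. apply Hno. exists (j - 1)%nat. split; [lia|].
      replace (j - 1 + 1)%nat with j by lia. auto.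
Qed.

Lemma dhat_pos_of_X beta x : Xbeta beta x -> exists n, (0 < dhat beta n)%nat.
Proof. intros H. rewrite Xbeta_iff in H. destruct (H 0%nat) as [b [[_ Hb] _]].
  destruct (Hb 0%nat) as [n [_ Hn]]. exists n. lia. Qed.

Fixpoint vtx (beta : R) (x : Seq) (t : nat) : nat :=
  match t with 0%nat => 0%nat | S t' => if Nat.eqb (x t') (dhat beta (vtx beta x t')) then S (vtx beta x t') else 0%nat end.

Lemma vtx_inv beta x t : (vtx beta x t <= t)%nat /\ (forall i, (i < vtx beta x t)%nat -> x (t - vtx beta x t + i)%nat = dhat beta i).
Proof. induction t as [|t [IH1 IH2]]; simpl. split; [lia|intros; lia].
  destruct (Nat.eqb_spec (x t) (dhat beta (vtx beta x t))) as [E|E]; split; try lia.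
  - intros i Hi. destruct (Nat.eq_dec i (vtx beta x t)) as [Ei|Ei].
    + rewrite Ei. replace (t - vtx beta x t + vtx beta x t)%nat with t by lia. auto.
    + apply IH2. lia.
Qed.

Lemma vtx_le beta x t : Xbeta beta x -> (x t <= dhat beta (vtx beta x t))%nat.
Proof. intros H. destruct (vtx_inv beta x t) as [H1 H2]. set (m := vtx beta x t) in *.
  rewrite Xbeta_iff in H. destruct (H (S t)) as [b [[_ Hb] Ha]].
  destruct (Hb (t - m)%nat) as [n [Hn1 Hn2]]. unfold shiftn in *.
  destruct (Nat.lt_total n m) as [Hl|[Hl|Hl]].
  - exfalso. rewrite <- Ha in Hn2 by lia. rewrite H2 in Hn2 by auto. lia.
  - subst n. replace (t - m + m)%nat with t in Hn2 by lia. rewrite Ha by lia. lia.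
  - specialize (Hn1 m Hl). replace (t - m + m)%nat with t in Hn1 by lia. rewrite Ha by lia. lia.
Qed.

Lemma vtx_edge beta x t : Xbeta beta x -> Gedge beta (vtx beta x t) (vtx beta x (S t)) (x t).
Proof. intros H. pose proof (vtx_le beta x t H). unfold Gedge. simpl.
  destruct (Nat.eqb_spec (x t) (dhat beta (vtx beta x t))); [left|right]; split; auto; lia. Qed.

Lemma find_T beta x T0 : Xbeta beta x ->
  exists T, (T0 <= T)%nat /\ ((vtx beta x T = 0%nat /\ (1 <= T)%nat) \/ (0 < dhat beta (vtx beta x T))%nat).
Proof. intros HX. destruct (classic (exists t, (T0 <= t)%nat /\ vtx beta x (S t) = 0%nat)) as [[t [Ht Hv]]|Hno].
  - exists (S t). split; [lia|]. left; split; auto; lia.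
  - assert (Hs : forall i, vtx beta x (T0 + i) = (vtx beta x T0 + i)%nat).
    { induction i. rewrite !Nat.add_0_r; auto. replace (T0 + S i)%nat with (S (T0 + i)) by lia.
      assert (vtx beta x (S (T0 + i)) <> 0%nat) by (intro; apply Hno; exists (T0 + i)%nat; split; auto; lia).
      simpl in H |- *. destruct (Nat.eqb (x (T0 + i)%nat) (dhat beta (vtx beta x (T0 + i)))); [|lia]. rewrite IHi. lia. }
    destruct (dhat_inf beta (dhat_pos_of_X beta x HX) (vtx beta x T0)) as [i [Hi Hpos]].
    exists (T0 + (i - vtx beta x T0))%nat. split; [lia|]. right. rewrite Hs. replace (vtx beta x T0 + (i - vtx beta x T0))%nat with i by lia. auto.
Qed.

Theorem Xbeta_closeable beta x : Xbeta beta x -> closeable (PerG beta) x.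
Proof. intros HX eps N Heps HN.
  destruct (half_pow_small eps Heps) as [L HL].
  destruct (INR_archimed eps (1 + INR L + eps * INR L) Heps) as [K HK].
  destruct (find_T beta x (K + N + L + 1) HX) as [T [HT Hcase]].
  assert (Hr : exists r, (r = 0%nat /\ vtx beta x T = 0%nat) \/ (r = 1%nat /\ (0 < dhat beta (vtx beta x T))%nat)).
  { destruct Hcase as [[h _]|h]; [exists 0%nat|exists 1%nat]; auto. }
  destruct Hr as [r Hr].
  assert (Hr1 : (r <= 1)%nat) by (destruct Hr as [[-> _]|[-> _]]; lia).
  set (q := (T + r)%nat). set (p := (T - L)%nat).
  set (w := fun i => if Nat.ltb i T then x i else 0%nat).
  set (v := fun i => if Nat.leb i T then vtx beta x i else 0%nat).
  set (y := fun i => w (i mod q)%nat).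
  assert (Hq : (0 < q)%nat) by (unfold q; lia).
  exists p, q, y. split; [unfold p; lia|]. split; [unfold p, q; lia|]. split.
  { unfold p, q. rewrite minus_INR by lia. rewrite plus_INR.
    assert (INR r <= 1) by (replace 1 with (INR 1) by reflexivity; apply le_INR; auto).
    assert (INR K <= INR T) by (apply le_INR; lia). nra. }
  split.
  { intros j Hj. unfold Bowen. eapply Rle_lt_trans; [|apply HL]. apply rho_agree. intros i Hi.
    unfold shiftn, y. rewrite Nat.mod_small by (unfold p, q in *; lia). unfold w.
    destruct (Nat.ltb_spec (j + i) T); auto. unfold p in Hj; lia. }
  split.
  { exists v, w, q. split; auto. split.
    { unfold v. destruct (Nat.leb_spec q T); destruct (Nat.leb_spec 0 T); try lia; simpl; auto.
      destruct Hr as [[-> Hv]|[-> _]]; unfold q in *; [rewrite Nat.add_0_r; auto|lia]. }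
    split.
    { intros i Hi. unfold v, w. destruct (Nat.ltb_spec i T).
      - destruct (Nat.leb_spec i T); [|lia]. destruct (Nat.leb_spec (S i) T); [|lia]. apply vtx_edge; auto.
      - destruct Hr as [[-> _]|[-> Hpos]]; unfold q in Hi; [lia|]. assert (i = T) by lia. subst i.
        destruct (Nat.leb_spec T T); [|lia]. destruct (Nat.leb_spec (S T) T); [lia|].
        right. split; auto. }
    intros i. reflexivity. }
  intros i. unfold y. f_equal. replace (q + i)%nat with (i + 1 * q)%nat by lia. apply Nat.Div0.mod_add.
Qed.
Import ListNotations.

Fixpoint lsum {A : Type} (l : list A) (f : A -> R) : R :=
  match l with nil => 0 | a :: l' => f a + lsum l' f end.

Lemma lsum_app {A} (l1 l2 : list A) f : lsum (l1 ++ l2) f = lsum l1 f + lsum l2 f.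
Proof. induction l1; simpl; try rewrite IHl1; lra. Qed.
Lemma lsum_map {A B} (g : A -> B) l f : lsum (map g l) f = lsum l (fun a => f (g a)).
Proof. induction l; simpl; try rewrite IHl; lra. Qed.
Lemma lsum_flat_map {A B} (g : A -> list B) l f : lsum (flat_map g l) f = lsum l (fun a => lsum (g a) f).
Proof. induction l; simpl; try rewrite lsum_app, IHl; lra. Qed.
Lemma lsum_ext {A} (l : list A) f g : (forall a, In a l -> f a = g a) -> lsum l f = lsum l g.
Proof. induction l; intros H; simpl; auto. rewrite H by (left; auto). rewrite IHl; auto. intros; apply H; right; auto. Qed.
Lemma lsum_plus {A} (l : list A) f g : lsum l (fun a => f a + g a) = lsum l f + lsum l g.
Proof. induction l; simpl; try rewrite IHl; lra. Qed.
Lemma lsum_scal {A} (l : list A) c f : lsum l (fun a => c * f a) = c * lsum l f.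
Proof. induction l; simpl; try rewrite IHl; lra. Qed.

Lemma lsum_seq_pick (x0 n : nat) (g : nat -> R) : (x0 < n)%nat ->
  lsum (seq 0 n) (fun a => if Nat.eq_dec x0 a then g a else 0) = g x0.
Proof. induction n; intros H; [lia|]. rewrite seq_S, lsum_app. simpl.
  destruct (Nat.eq_dec x0 n). subst.
  - rewrite (lsum_ext _ _ (fun _ => 0)). clear. assert (forall l : list nat, lsum l (fun _ => 0) = 0) by (induction l; simpl; try rewrite IHl; lra).
    rewrite H; lra. intros a Ha. apply in_seq in Ha. destruct Nat.eq_dec; auto; lia.
  - rewrite IHn by lia. lra. Qed.

Fixpoint words (B L : nat) : list (list nat) :=
  match L with 0%nat => [[]] | S L' => flat_map (fun a => map (cons a) (words B L')) (seq 0 (S B)) end.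

Definition cylw (w : list nat) : Seq -> Prop := fun x => forall i, (i < length w)%nat -> x i = nth i w 0%nat.

Fixpoint pfx (L : nat) (x : Seq) : list nat := match L with 0%nat => [] | S L' => x 0%nat :: pfx L' (shiftn 1 x) end.

Lemma borel_cylw w : borel (cylw w).
Proof. exact (borel_cyl (length w) (fun i => nth i w 0%nat)). Qed.

Lemma dep_cylw w : dep (length w) (cylw w).
Proof. intros x y Hxy. unfold cylw. split; intros H i Hi; rewrite <- H; auto. symmetry; apply Hxy; auto. Qed.

Lemma dep_cylw_c w : dep (length w) (fun x => ~ cylw w x).
Proof. intros x y Hxy. pose proof (dep_cylw w x y Hxy). tauto. Qed.

Lemma cylw_cons a w x : cylw (a :: w) x <-> x 0%nat = a /\ cylw w (shiftn 1 x).
Proof. unfold cylw, shiftn; simpl. split.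
  - intros H. split. apply (H 0%nat); lia. intros i Hi. apply (H (S i)); lia.
  - intros [H1 H2] [|i] Hi; auto. apply H2; lia. Qed.

Lemma sum_words B L : forall (h : list nat -> R) x, (forall i, (x i <= B)%nat) ->
  lsum (words B L) (fun w => h w * indic (cylw w) x) = h (pfx L x).
Proof. induction L; intros h x Hx; cbn [words pfx].
  - simpl. rewrite indic_1. lra. intros i Hi; simpl in Hi; lia.
  - rewrite lsum_flat_map.
    rewrite (lsum_ext _ _ (fun a => if Nat.eq_dec (x 0%nat) a then h (x 0%nat :: pfx L (shiftn 1 x)) else 0)).
    + rewrite lsum_seq_pick; auto. specialize (Hx 0%nat); lia.
    + intros a Ha. rewrite lsum_map. destruct Nat.eq_dec as [E|E].
      * subst a. rewrite <- (IHL (fun w => h (x 0%nat :: w)) (shiftn 1 x)) by (intros; apply Hx).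
        apply lsum_ext. intros w _. f_equal. unfold indic. do 2 destruct excluded_middle_informative; auto; exfalso.
        all: apply n; first [apply (proj2 (cylw_cons _ _ _)); split; auto | apply (proj1 (cylw_cons _ _ _) c)].
      * clear IHL. induction (words B L); simpl; auto. rewrite IHl. rewrite indic_0. lra.
        intros Hc. apply cylw_cons in Hc. destruct Hc; auto.
Qed.

Lemma in_words B L w : In w (words B L) -> length w = L /\ (forall i, (i < L)%nat -> (nth i w 0 <= B)%nat).
Proof. revert w; induction L; intros w H; cbn [words] in H.
  - destruct H as [<-|[]]. split; auto. intros; lia.
  - apply in_flat_map in H. destruct H as [a [Ha Hw]]. apply in_map_iff in Hw. destruct Hw as [w' [<- Hw']].
    apply IHL in Hw'. destruct Hw' as [H1 H2]. apply in_seq in Ha. simpl. split; [simpl; lia|].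
    intros [|i] Hi; simpl; [lia|]. apply H2; lia. Qed.

Definition wl (h : list nat -> R) (ws : list (list nat)) : list (R * (Seq -> Prop)) := map (fun w => (h w, cylw w)) ws.

Lemma sval_wl h ws x : sval (wl h ws) x = lsum ws (fun w => h w * indic (cylw w) x).
Proof. induction ws; simpl; auto. rewrite IHws; auto. Qed.
Lemma sint_wl mu h ws : sint mu (wl h ws) = lsum ws (fun w => h w * mu (cylw w)).
Proof. induction ws; simpl; auto. rewrite IHws; auto. Qed.
Lemma simple_wl h ws : simple (wl h ws).
Proof. intros c A Hin. unfold wl in Hin. apply in_map_iff in Hin. destruct Hin as [w [E _]]. inversion E; subst. apply borel_cylw. Qed.

Lemma mu_null2 mu A B : prob_measure mu -> borel A -> borel B -> mu A = 0 -> mu B = 0 -> mu (fun x => A x \/ B x) = 0.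
Proof. intros PM HA HB H1 H2.
  rewrite <- (mu_null_union mu PM (fun n => match n with 0%nat => A | _ => B end)).
  - apply mu_ext. intros x; split. intros [H|H]; [exists 0%nat|exists 1%nat]; auto. intros [[|n] H]; auto.
  - intros [|n]; auto.
  - intros [|n]; auto.
Qed.

Definition NullW (mu : (Seq -> Prop) -> R) (w : list nat) : Seq -> Prop :=
  fun x => exists j, Lset (cylw w) (mu (cylw w)) (/ (INR j + 1)) x \/
                     Lset (fun y => ~ cylw w y) (mu (fun y => ~ cylw w y)) (/ (INR j + 1)) x.

Lemma NullW_null mu S w : prob_measure mu -> invariant mu -> ergodic_on S mu -> mu (NullW mu w) = 0 /\ borel (NullW mu w).
Proof. intros PM Hinv Herg.
  assert (Hj : forall j : nat, 0 < / (INR j + 1)) by (intros; apply Rinv_0_lt_compat; pose proof (pos_INR j); lra).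
  assert (HB : forall j, borel (fun x => Lset (cylw w) (mu (cylw w)) (/ (INR j + 1)) x \/
                     Lset (fun y => ~ cylw w y) (mu (fun y => ~ cylw w y)) (/ (INR j + 1)) x)).
  { intros j; apply borel_union2; eapply borel_Lset; [apply dep_cylw|apply dep_cylw_c]. }
  split; [|apply borel_union; auto].
  apply mu_null_union; auto. intros j. apply mu_null2; auto.
  eapply borel_Lset; apply dep_cylw. eapply borel_Lset; apply dep_cylw_c.
  eapply Birk_upper; eauto; apply dep_cylw. eapply Birk_upper; eauto; apply dep_cylw_c.
Qed.

Definition NullAll (mu : (Seq -> Prop) -> R) (B : nat) : Seq -> Prop :=
  fun x => exists L, exists i, NullW mu (nth i (words B L) []) x.

Lemma mu_and1 mu A B : prob_measure mu -> borel A -> borel B -> mu A = 1 -> mu B = 1 -> mu (fun x => A x /\ B x) = 1.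
Proof. intros PM HA HB H1 H2.
  assert (mu (fun x => ~ A x \/ ~ B x) = 0).
  { apply mu_null2; auto using borel_compl; rewrite mu_compl; auto; lra. }
  rewrite <- (mu_ext mu (fun x => ~ (~ A x \/ ~ B x))). rewrite mu_compl, H; auto. lra.
  apply borel_union2; auto using borel_compl. intros x; split; [intros; split; apply NNPP; tauto|tauto]. Qed.

Theorem good_point mu beta : prob_measure mu -> invariant mu -> ergodic_on (Xbeta beta) mu -> mu (Xbeta beta) = 1 ->
  exists x, Xbeta beta x /\ forall w, In w (words (Z.to_nat (rfloor beta)) (length w)) ->
     Un_cv (fun n => cnt (cylw w) x (S n) / INR (S n)) (mu (cylw w)).
Proof. intros PM Hinv Herg HX. set (B := Z.to_nat (rfloor beta)).
  assert (HN : mu (NullAll mu B) = 0 /\ borel (NullAll mu B)).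
  { split.
    - apply mu_null_union; auto. intros L; apply borel_union; intros i; eapply NullW_null; eauto.
      intros L; apply mu_null_union; auto. intros i; eapply NullW_null; eauto. intros i; eapply NullW_null; eauto.
    - apply borel_union; intros L; apply borel_union; intros i; eapply NullW_null; eauto. }
  destruct HN as [HN0 HNb].
  destruct (mu_one_nonempty mu PM (fun x => Xbeta beta x /\ ~ NullAll mu B x)) as [x [Hx Hnx]].
  { apply borel_inter; auto using borel_compl, borel_Xbeta. }
  { rewrite mu_and1; auto using borel_compl, borel_Xbeta. lra. rewrite mu_compl; auto; lra. }
  exists x. split; auto. intros w Hw.
  destruct (In_nth _ _ [] Hw) as [i [Hi Ei]].
  assert (Hnw : ~ NullW mu w x) by (intros Hc; apply Hnx; exists (length w), i; rewrite Ei; auto).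
  apply freq_cv.
  - intros j Hc. apply Hnw. exists j. left; auto.
  - intros j Hc. apply Hnw. exists j. right. rewrite mu_compl; auto. apply borel_cylw.
Qed.
Import ListNotations.

Definition pref (p : list nat) (x : Seq) : Prop := forall i, (i < length p)%nat -> x i = nth i p 0%nat.

Lemma unif_cont beta f : continuous_on (Xbeta beta) f -> forall eps, 0 < eps ->
  exists L, forall x y, Xbeta beta x -> Xbeta beta y -> agree L x y -> Rabs (f x - f y) < eps.
Proof. intros Hf eps Heps. apply NNPP. intros Hno.
  assert (H : forall L, exists x, Xbeta beta x /\ exists y, Xbeta beta y /\ agree L x y /\ eps <= Rabs (f x - f y)).
  { intros L. apply NNPP; intros Hc. apply Hno. exists L. intros x y Hx Hy Ha. apply Rnot_le_lt. intros Hle.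
    apply Hc. exists x. split; auto. exists y. auto. }
  set (X := fun L => proj1_sig (constructive_indefinite_description _ (H L))).
  assert (HX : forall L, Xbeta beta (X L) /\ exists y, Xbeta beta y /\ agree L (X L) y /\ eps <= Rabs (f (X L) - f y)).
  { intros L. unfold X. destruct constructive_indefinite_description; simpl; auto. }
  set (Bd := Z.to_nat (rfloor beta)).
  set (inf := fun p => forall M, exists L, (M <= L)%nat /\ pref p (X L)).
  assert (Hext : forall p, inf p -> exists a, inf (p ++ [a])).
  { intros p Hp. apply NNPP. intros Hn.
    assert (Hb : forall a, exists Ma, forall L, (Ma <= L)%nat -> ~ pref (p ++ [a]) (X L)).
    { intros a. apply NNPP; intros Hc. apply Hn. exists a. intros M. apply NNPP; intros Hc'. apply Hc. exists M.
      intros L HL Hpr. apply Hc'. exists L; auto. }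
    assert (Hunif : forall B', exists M, forall a, (a <= B')%nat -> forall L, (M <= L)%nat -> ~ pref (p ++ [a]) (X L)).
    { induction B'.
      - destruct (Hb 0%nat) as [M HM]. exists M. intros a Ha. replace a with 0%nat by lia. auto.
      - destruct IHB' as [M1 HM1]. destruct (Hb (S B')) as [M2 HM2]. exists (M1 + M2)%nat. intros a Ha L HL.
        destruct (Nat.eq_dec a (S B')). subst; apply HM2; lia. apply HM1; lia. }
    destruct (Hunif Bd) as [M HM]. destruct (Hp M) as [L [HL Hpr]].
    apply (HM (X L (length p)) (Xbeta_bound beta _ _ (proj1 (HX L))) L HL).
    intros i Hi. rewrite length_app in Hi. simpl in Hi. destruct (Nat.lt_ge_cases i (length p)).
    - rewrite app_nth1 by auto. apply Hpr; auto.
    - replace i with (length p) by lia. rewrite app_nth2 by lia. rewrite Nat.sub_diag. reflexivity. }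
  set (nxt := fun p => epsilon (inhabits 0%nat) (fun a => inf (p ++ [a]))).
  set (pp := fix pp n := match n with 0%nat => [] | S n' => pp n' ++ [nxt (pp n')] end).
  assert (Hpp : forall n, inf (pp n) /\ length (pp n) = n).
  { induction n; simpl. split; auto. intros M; exists M; split; auto. intros i Hi; simpl in Hi; lia.
    destruct IHn as [I1 I2]. split. apply (epsilon_spec (inhabits 0%nat) (fun a => inf (pp n ++ [a]))). apply Hext; auto.
    rewrite length_app, I2; simpl; lia. }
  assert (HppS : forall n i, (i < n)%nat -> nth i (pp (S n)) 0%nat = nth i (pp n) 0%nat).
  { intros n i Hi. simpl. rewrite app_nth1; auto. rewrite (proj2 (Hpp n)); auto. }
  set (z := fun i => nth i (pp (S i)) 0%nat).
  assert (Hz : forall n i, (i < n)%nat -> nth i (pp n) 0%nat = z i).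
  { intros n i Hi. induction Hi. reflexivity. rewrite HppS by lia. auto. }
  assert (Hzpref : forall n L, pref (pp n) (X L) -> agree n z (X L)).
  { intros n L Hpr i Hi. rewrite Hpr by (rewrite (proj2 (Hpp n)); auto). symmetry. apply Hz; auto. }
  assert (HzX : Xbeta beta z).
  { apply Xbeta_closed. intros n. destruct (proj1 (Hpp n) 0%nat) as [L [_ Hpr]]. exists (X L). split. apply HX. apply Hzpref; auto. }
  destruct (Hf z HzX (eps / 2) ltac:(lra)) as [delta [Hd Hdelta]].
  destruct (half_pow_small delta Hd) as [K HK].
  destruct (proj1 (Hpp K) K) as [L [HL Hpr]].
  destruct (HX L) as [HXL [y [Hy [Hay Hfy]]]].
  assert (A1 : agree K z (X L)) by (apply Hzpref; auto).
  assert (A2 : agree K z y) by (intros i Hi; rewrite A1, Hay; auto; lia).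
  pose proof (Hdelta (X L) HXL ltac:(pose proof (rho_agree _ _ _ A1); lra)) as E1.
  pose proof (Hdelta y Hy ltac:(pose proof (rho_agree _ _ _ A2); lra)) as E2.
  rewrite Rabs_minus_sym in E2. pose proof (Rabs_triang (f (X L) - f z) (f z - f y)) as E3.
  replace (f (X L) - f z + (f z - f y)) with (f (X L) - f y) in E3 by ring. lra.
Qed.
Import ListNotations.

Definition seqw (w : list nat) : Seq := fun i => nth i w 0%nat.

Definition Ext (beta : R) (L : nat) (u : Seq) : Seq :=
  match excluded_middle_informative (exists z, Xbeta beta z /\ agree L z u) with
  | left H => proj1_sig (constructive_indefinite_description _ H)
  | right _ => u end.

Lemma Ext_spec beta L u : (exists z, Xbeta beta z /\ agree L z u) -> Xbeta beta (Ext beta L u) /\ agree L (Ext beta L u) u.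
Proof. intros H. unfold Ext. destruct excluded_middle_informative; [|tauto].
  destruct constructive_indefinite_description; simpl; auto. Qed.

Lemma nth_pre L : forall x i, (i < L)%nat -> nth i (pfx L x) 0%nat = x i.
Proof. induction L; intros x i Hi; [lia|]. destruct i; simpl; auto. rewrite IHL by lia. reflexivity. Qed.

Lemma length_pre L : forall x, length (pfx L x) = L.
Proof. induction L; intros; simpl; auto. Qed.

Lemma pre_in_words B L : forall x, (forall i, (x i <= B)%nat) -> In (pfx L x) (words B L).
Proof. induction L; intros x Hx; cbn [words pfx]; [left; auto|]. apply in_flat_map. exists (x 0%nat). split.
  apply in_seq. specialize (Hx 0%nat); lia. apply in_map. apply IHL. intros; apply Hx. Qed.

Lemma sum_f_rsum f n : sum_f_R0 f n = rsum f (S n).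
Proof. induction n; simpl; auto. lra. rewrite IHn. simpl. auto. Qed.

Lemma rsum_lsum {A} (l : list A) (F : A -> nat -> R) n :
  rsum (fun j => lsum l (fun a => F a j)) n = lsum l (fun a => rsum (F a) n).
Proof. induction n; simpl. induction l; simpl; try rewrite <- IHl; lra.
  rewrite IHn. rewrite <- lsum_plus. auto. Qed.

Lemma Un_cv_const c : Un_cv (fun _ => c) c.
Proof. intros e He. exists 0%nat. intros. unfold Rdist. rewrite Rminus_diag, Rabs_R0. lra. Qed.

Lemma lsum_cv {A} (l : list A) (u : A -> nat -> R) (v : A -> R) :
  (forall a, In a l -> Un_cv (u a) (v a)) -> Un_cv (fun n => lsum l (fun a => u a n)) (lsum l v).
Proof. induction l; intros H; simpl. apply Un_cv_const.
  apply CV_plus. apply H; left; auto. apply IHl. intros; apply H; right; auto. Qed.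

Lemma rsum_abs_le d n e : (forall j, Rabs (d j) <= e) -> Rabs (rsum d n) <= INR n * e.
Proof. intros H; induction n; simpl rsum. simpl; rewrite Rabs_R0; lra.
  rewrite S_INR. pose proof (Rabs_triang (rsum d n) (d n)). specialize (H n). lra. Qed.

Lemma lim_close A G I J e : Un_cv A I -> Un_cv G J -> (forall n, Rabs (A n - G n) <= e) -> Rabs (I - J) <= e.
Proof. intros HA HG H. apply Rnot_lt_le. intros Hlt.
  set (d := Rabs (I - J) - e). destruct (HA (d/2) ltac:(unfold d; lra)) as [N1 H1]. destruct (HG (d/2) ltac:(unfold d; lra)) as [N2 H2].
  specialize (H1 (N1 + N2)%nat ltac:(lia)). specialize (H2 (N1 + N2)%nat ltac:(lia)). specialize (H (N1 + N2)%nat).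
  unfold Rdist in *. set (a := A (N1 + N2)%nat) in *. set (g := G (N1 + N2)%nat) in *.
  pose proof (Rabs_triang (I - a) (a - J)). pose proof (Rabs_triang (a - g) (g - J)).
  replace (I - a + (a - J)) with (I - J) in H0 by ring. replace (a - g + (g - J)) with (a - J) in H3 by ring.
  rewrite Rabs_minus_sym in H1. unfold d in *. lra. Qed.

Lemma abs_le_split x a : Rabs x <= a -> - a <= x <= a.
Proof. intros H. pose proof (Rle_abs x). pose proof (Rle_abs (- x)). rewrite Rabs_Ropp in H1. lra. Qed.

Theorem generic_of_freq beta mu x : prob_measure mu -> mu (Xbeta beta) = 1 -> Xbeta beta x ->
  (forall w, In w (words (Z.to_nat (rfloor beta)) (length w)) ->
     Un_cv (fun n => cnt (cylw w) x (S n) / INR (S n)) (mu (cylw w))) ->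
  generic (Xbeta beta) mu x.
Proof. intros PM HXm HX Hfreq f Hf.
  set (Bd := Z.to_nat (rfloor beta)).
  set (avg := fun (F : Seq -> R) n => sum_f_R0 (fun j => F (shiftn j x)) n / INR (n + 1)).
  set (h := fun L w => f (Ext beta L (seqw w))).
  set (J := fun L => lsum (words Bd L) (fun w => h L w * mu (cylw w))).
  assert (Happrox : forall e, 0 < e -> exists L, forall x', Xbeta beta x' -> Rabs (h L (pfx L x') - f x') < e).
  { intros e He. destruct (unif_cont beta f Hf e He) as [L HL]. exists L. intros x' Hx'.
    destruct (Ext_spec beta L (seqw (pfx L x'))) as [E1 E2].
    { exists x'. split; auto. intros i Hi. unfold seqw. rewrite nth_pre; auto. }
    apply HL; auto. intros i Hi. rewrite E2 by auto. unfold seqw. rewrite nth_pre; auto. }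
  assert (Hbd : forall j i, (shiftn j x i <= Bd)%nat) by (intros; apply Xbeta_bound, Xbeta_shift; auto).
  assert (Havg : forall L n, avg (fun x' => h L (pfx L x')) n = lsum (words Bd L) (fun w => h L w * (cnt (cylw w) x (S n) / INR (S n)))).
  { intros L n. unfold avg. rewrite sum_f_rsum. replace (n + 1)%nat with (S n) by lia.
    rewrite (rsum_ext _ (fun j => lsum (words Bd L) (fun w => h L w * indic (cylw w) (shiftn j x)))).
    2: { intros j _. rewrite sum_words; auto. }
    rewrite rsum_lsum. unfold Rdiv. rewrite Rmult_comm, <- lsum_scal. apply lsum_ext. intros w _.
    rewrite rsum_scal. unfold cnt. lra. }
  assert (HcvG : forall L, Un_cv (avg (fun x' => h L (pfx L x'))) (J L)).
  { intros L. apply (Un_cv_ext (fun n => lsum (words Bd L) (fun w => h L w * (cnt (cylw w) x (S n) / INR (S n))))).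
    intros n; rewrite Havg; auto.
    apply lsum_cv. intros w Hw. apply CV_mult. apply Un_cv_const. apply Hfreq.
    rewrite (proj1 (in_words _ _ _ Hw)). auto. }
  assert (Hdiff : forall L e, (forall x', Xbeta beta x' -> Rabs (h L (pfx L x') - f x') < e) ->
     forall n, Rabs (avg f n - avg (fun x' => h L (pfx L x')) n) <= e).
  { intros L e HL n. unfold avg. rewrite !sum_f_rsum. unfold Rdiv. rewrite <- Rmult_minus_distr_r.
    replace (rsum (fun j => f (shiftn j x)) (S n) - rsum (fun j => h L (pfx L (shiftn j x))) (S n)) with
       (rsum (fun j => f (shiftn j x) - h L (pfx L (shiftn j x))) (S n)).
    2: { clear. induction (S n); simpl; try rewrite IHn0; lra. }
    replace (n + 1)%nat with (S n) by lia.
    assert (HS : 0 < INR (S n)) by (apply lt_0_INR; lia).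
    rewrite Rabs_mult, Rabs_inv, (Rabs_right (INR (S n))) by lra.
    pose proof (rsum_abs_le (fun j => f (shiftn j x) - h L (pfx L (shiftn j x))) (S n) e).
    apply Rmult_le_reg_r with (INR (S n)); auto. rewrite Rmult_assoc, Rinv_l by lra.
    rewrite Rmult_1_r, Rmult_comm. apply H. intros j. rewrite Rabs_minus_sym. left. apply HL. apply Xbeta_shift; auto. }
  assert (Hcauchy : Cauchy_crit (avg f)).
  { intros eta Heta. destruct (Happrox (eta / 4) ltac:(lra)) as [L HL].
    destruct (CV_Cauchy _ (exist _ _ (HcvG L)) (eta / 4) ltac:(lra)) as [N HN].
    exists N. intros n m Hn Hm. specialize (HN n m Hn Hm). pose proof (Hdiff L _ HL n). pose proof (Hdiff L _ HL m).
    unfold Rdist in *. set (a := avg f n) in *. set (b := avg f m) in *.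
    set (g1 := avg (fun x' => h L (pfx L x')) n) in *. set (g2 := avg (fun x' => h L (pfx L x')) m) in *.
    pose proof (Rabs_triang (a - g1) (g1 - b)). pose proof (Rabs_triang (g1 - g2) (g2 - b)).
    replace (a - g1 + (g1 - b)) with (a - b) in H1 by ring. replace (g1 - g2 + (g2 - b)) with (g1 - b) in H2 by ring.
    rewrite Rabs_minus_sym in H0. lra. }
  destruct (R_complete _ Hcauchy) as [I HI].
  assert (HIJ : forall e, 0 < e -> exists L, (forall x', Xbeta beta x' -> Rabs (h L (pfx L x') - f x') < e) /\ Rabs (I - J L) <= e).
  { intros e He. destruct (Happrox e He) as [L HL]. exists L. split; auto. eapply lim_close; eauto. }
  assert (HS : borel (Xbeta beta)) by apply borel_Xbeta.
  assert (Hswl : forall L c x', Xbeta beta x' -> sval (wl (h L) (words Bd L) ++ [(c, fun _ => True)]) x' = h L (pfx L x') + c).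
  { intros L c x' Hx'. rewrite sval_app, sval_wl, sum_words. simpl. rewrite indic_1; auto. lra. intros; apply Xbeta_bound; auto. }
  assert (Hiwl : forall L c, sint mu (wl (h L) (words Bd L) ++ [(c, fun _ => True)]) = J L + c).
  { intros L c. rewrite sint_app, sint_wl. simpl. destruct PM as [_ [H1 _]]. rewrite H1. unfold J. lra. }
  assert (Hswl_s : forall L c, simple (wl (h L) (words Bd L) ++ [(c, fun _ => True)])).
  { intros L c. apply simple_app. apply simple_wl. intros c' A [E|[]]. inversion E; subst; apply borel_True. }
  exists I. split; [split|].
  - intros l Hl Hle. apply Rnot_lt_le. intros Hlt. set (e := (sint mu l - I) / 3).
    destruct (HIJ e ltac:(unfold e; lra)) as [L [HL HJ]].
    pose proof (sint_mono mu (Xbeta beta) PM HS HXm l _ Hl (Hswl_s L e)) as M.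
    rewrite Hiwl in M. apply abs_le_split in HJ. unfold e in *.
    assert (sint mu l <= J L + (sint mu l - I) / 3); [|lra]. apply M.
    intros x' Hx'. rewrite Hswl by auto. specialize (HL x' Hx'). specialize (Hle x' Hx'). apply Rabs_def2 in HL. lra.
  - intros l Hl Hle. apply Rnot_lt_le. intros Hlt. set (e := (I - sint mu l) / 3).
    destruct (HIJ e ltac:(unfold e; lra)) as [L [HL HJ]].
    pose proof (sint_mono mu (Xbeta beta) PM HS HXm _ l (Hswl_s L (- e)) Hl) as M.
    rewrite Hiwl in M. apply abs_le_split in HJ. unfold e in *.
    assert (J L + - ((I - sint mu l) / 3) <= sint mu l); [|lra]. apply M.
    intros x' Hx'. rewrite Hswl by auto. specialize (HL x' Hx'). specialize (Hle x' Hx'). apply Rabs_def2 in HL. lra.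
  - exact HI.
Qed.

Theorem proposition4p8 (beta : R) (Hbeta : 1 < beta) :
  forall mu : (Seq -> Prop) -> R,
    measure_on (Xbeta beta) mu -> invariant mu -> ergodic_on (Xbeta beta) mu ->
    exists x, Xbeta beta x /\ generic (Xbeta beta) mu x /\ closeable (PerG beta) x.
Proof.
  intros mu [PM HXm] Hinv Herg.
  destruct (good_point mu beta PM Hinv Herg HXm) as [x [Hx Hf]].
  exists x. split; auto. split.
  - apply generic_of_freq; auto.
  - apply Xbeta_closeable; auto.
Qed.
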